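(* If $G_1$ and $G_2$ admit uniform WIASIs, then the cartesian product $G_1\times G_2$ admits a uniform WIASI and $\varphi(G_1\times G_2)=0$.
   Context: All graphs are finite, simple and without isolated vertices. $\mathbb{N}_0$ denotes the set of non-negative integers; for finite $A,B\subseteq\mathbb{N}_0$, $A+B=\{a+b: a\in A, b\in B\}$. An integer additive set-indexer (IASI) of a graph $G$ is an injective map $f$ from $V(G)$ to the finite non-empty subsets of $\mathbb{N}_0$ such that the induced edge map $f^+(uv)=f(u)+f(v)$ is injective on $E(G)$. A weak IASI (WIASI) is an IASI $f$ with $|f^+(uv)|=\max(|f(u)|,|f(v)|)$ for every edge $uv$ (equivalently, for every edge at least one end vertex has a singleton label). A vertex or edge is mono-indexed if its set-label has cardinality $1$. Every graph admits a WIASI. The sparing number $\varphi(G)$ is the minimum, over all WIASIs of $G$, of the number of mono-indexed edges of $G$. For an integer $k\ge 2$, a WIASI $f$ is $k$-uniform if $|f^+(e)|=k$ for every edge $e$; $G$ admits a uniform WIASI (UWIASI) if it admits a $k$-uniform WIASI for some integer $k\ge 2$. The cartesian product $G_1\times G_2$ has vertex set $V(G_1)\times V(G_2)$, with $(a,b)$ adjacent to $(a',b')$ iff either $a=a'$ and $bb'\in E(G_2)$, or $b=b'$ and $aa'\in E(G_1)$. *)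

(* Defs.v *)
From mathcomp Require Import all_boot.
Set Implicit Arguments. Unset Strict Implicit. Unset Printing Implicit Defensive.

Definition simple_graph (T : finType) (e : rel T) : Prop :=
  symmetric e /\ irreflexive e /\ (forall x : T, exists y, e x y).

(* Finite subsets of N_0 are represented by sequences of naturals,
   read as sets (equality of sets is =i, cardinality counts distinct items). *)
Definition sumset (A B : seq nat) : seq nat := [seq a + b | a <- A, b <- B].
Definition card_n (A : seq nat) : nat := size (undup A).

Definition edges (T : finType) (e : rel T) : {set {set T}} :=
  [set [set p.1; p.2] | p : T * T & e p.1 p.2].

Definition is_IASI (T : finType) (e : rel T) (f : T -> seq nat) : Prop :=
  (forall v, f v != [::]) /\
  (forall u v, f u =i f v -> u = v) /\
  (forall u v u' v', e u v -> e u' v' ->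
      sumset (f u) (f v) =i sumset (f u') (f v') -> [set u; v] = [set u'; v']).

Definition is_WIASI (T : finType) (e : rel T) (f : T -> seq nat) : Prop :=
  is_IASI e f /\
  (forall u v, e u v ->
      card_n (sumset (f u) (f v)) = maxn (card_n (f u)) (card_n (f v))).

Definition is_k_uniform_WIASI (T : finType) (e : rel T) (k : nat)
  (f : T -> seq nat) : Prop :=
  is_WIASI e f /\ (forall u v, e u v -> card_n (sumset (f u) (f v)) = k).

Definition admits_UWIASI (T : finType) (e : rel T) : Prop :=
  exists k f, 2 <= k /\ is_k_uniform_WIASI e k f.

Definition mono_edges_count (T : finType) (e : rel T) (f : T -> seq nat) : nat :=
  #|[set [set p.1; p.2] | p : T * T &
      e p.1 p.2 && (card_n (sumset (f p.1) (f p.2)) == 1)]|.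

Definition sparing_number (T : finType) (e : rel T) (n : nat) : Prop :=
  (exists f, is_WIASI e f /\ mono_edges_count e f = n) /\
  (forall f, is_WIASI e f -> n <= mono_edges_count e f).

Definition cart_prod (T1 T2 : finType) (e1 : rel T1) (e2 : rel T2) : rel (T1 * T2) :=
  fun x y => ((x.1 == y.1) && e2 x.2 y.2) || ((x.2 == y.2) && e1 x.1 y.1).

(* Main.v *)
Require Import Defs.
From mathcomp Require Import all_boot zify.
Set Implicit Arguments. Unset Strict Implicit.

Lemma card_n_eq A B : A =i B -> card_n A = card_n B.
Proof.
move=> H; rewrite /card_n; apply: perm_size; apply: uniq_perm; try exact: undup_uniq.
by move=> x; rewrite !mem_undup H.
Qed.

Lemma card_n_gt0 A : A != [::] -> 0 < card_n A.
Proof.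
case: A => [|a A] //= _; rewrite /card_n; have : a \in undup (a :: A) by rewrite mem_undup mem_head.
by case: (undup _).
Qed.

Lemma mem_sumset A B x : reflect (exists a b, [/\ a \in A, b \in B & x = a + b]) (x \in sumset A B).
Proof.
apply: (iffP allpairsP) => [[[a b] /= [H1 H2 H3]]|[a [b [H1 H2 H3]]]].
  by exists a, b.
by exists (a, b).
Qed.

Lemma sumsetC A B : sumset A B =i sumset B A.
Proof.
move=> x; apply/mem_sumset/mem_sumset => -[a [b [H1 H2 ->]]]; exists b, a; split => //; lia.
Qed.

Definition mx (B : seq nat) := foldr maxn 0 B.

Lemma mx_ge B b : b \in B -> b <= mx B.
Proof.
elim: B => //= c B IH; rewrite in_cons => /orP [/eqP ->|/IH]; lia.
Qed.

Lemma mx_in B : B != [::] -> mx B \in B.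
Proof.
elim: B => //= c B IH _; case: B IH => [|d B] IH.
  by rewrite /= in_cons; apply/orP; left; apply/eqP; lia.
change (maxn c (mx (d :: B)) \in c :: d :: B).
have H2 := IH isT; rewrite in_cons; case: (leqP (mx (d :: B)) c) => H.
  by apply/orP; left; apply/eqP; lia.
apply/orP; right.
exact: H2.
Qed.

Lemma two_elems A : 2 <= card_n A -> exists a1 a2, [/\ a1 \in A, a2 \in A & a1 < a2].
Proof.
rewrite /card_n; have U := undup_uniq A; have M := mem_undup A.
case E: (undup A) U M => [|x [|y s]] //= /andP [nx _] M _.
have hx : x \in A by rewrite -M mem_head.
have hy : y \in A by rewrite -M in_cons mem_head orbT.
have : x != y by move: nx; rewrite in_cons negb_or => /andP [].
case: (ltngtP x y) => // H _.
  by exists x, y.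
by exists y, x.
Qed.

Lemma key A B : 2 <= card_n A -> B != [::] -> card_n B < card_n (sumset A B).
Proof.
move=> /two_elems [a1 [a2 [h1 h2 lt]]] nB.
set m := mx B.
pose s1 := (a2 + m) :: undup [seq a1 + b | b <- B].
have -> : card_n B = (size s1).-1.
  by rewrite /s1 /= undup_map_inj ?size_map //; move=> x y /= /eqP; rewrite eqn_add2l => /eqP.
have : size s1 <= card_n (sumset A B).
  apply: uniq_leq_size.
    rewrite /s1 /= undup_uniq andbT mem_undup; apply/negP => /mapP [b hb].
    have := mx_ge hb; rewrite -/m; lia.
  move=> x; rewrite /s1 in_cons mem_undup mem_undup => /orP [/eqP ->|/mapP [b hb ->]];
    apply/mem_sumset.
    by exists a2, m; split => //; exact: mx_in.
  by exists a1, b.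
rewrite /s1 /=; lia.
Qed.

Lemma bip (T : finType) (e : rel T) k f : 2 <= k -> is_k_uniform_WIASI e k f ->
  forall x y, e x y -> (card_n (f x) == 1) != (card_n (f y) == 1).
Proof.
move=> hk [[[ne _] W] U] x y exy.
have h1 := W _ _ exy; have h2 := U _ _ exy.
have gx := card_n_gt0 (ne x); have gy := card_n_gt0 (ne y).
case: (leqP 2 (card_n (f x))) => ax; case: (leqP 2 (card_n (f y))) => ay.
- have := key ax (ne y); have := key ay (ne x).
  rewrite (card_n_eq (sumsetC (f y) (f x))); lia.
- apply/negP => /eqP E; move: E; lia.
- apply/negP => /eqP E; move: E; lia.
- lia.
Qed.
Lemma pair_eq s t : [:: s; s + 1] =i [:: t; t + 1] -> s = t.
Proof.
move=> H; have : s \in [:: t; t + 1] by rewrite -H mem_head.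
have : t \in [:: s; s + 1] by rewrite H mem_head.
rewrite !inE; lia.
Qed.

Lemma card2 s : card_n [:: s; s + 1] = 2.
Proof. rewrite /card_n /= inE; have -> : (s == s + 1) = false by lia. by []. Qed.

Lemma decode N a b a' b' : a < N -> a' < N -> a + N * b = a' + N * b' -> a = a' /\ b = b'.
Proof.
move=> ha ha' H.
have E : a = a'.
  have := congr1 (modn^~ N) H; rewrite /= !(addnC _ (N * _)) !(mulnC N) !modnMDl !modn_small //.
split => //; subst a'; move/eqP: H; rewrite eqn_add2l eqn_mul2l => /orP [/eqP N0|/eqP //].
by move: ha; rewrite N0.
Qed.

Section Gen.
Variables (T : finType) (e : rel T) (col : T -> bool).
Hypothesis hcol : forall x y, e x y -> col x != col y.

Definition idx (x : T) : nat := enum_rank x.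
Definition NN := #|T|.
Definition g (x : T) : seq nat :=
  if col x then [:: NN * idx x; NN * idx x + 1] else [:: idx x].

Lemma idx_lt x : idx x < NN.
Proof. exact: ltn_ord. Qed.

Lemma idx_inj x y : idx x = idx y -> x = y.
Proof. by move=> H; apply: enum_rank_inj; apply: val_inj. Qed.

Lemma orient x y : e x y -> exists lo hi, [/\ col lo = false, col hi = true,
  [set x; y] = [set lo; hi] &
  sumset (g x) (g y) =i [:: idx lo + NN * idx hi; idx lo + NN * idx hi + 1]].
Proof.
move=> exy; have := hcol exy; rewrite /g.
case cx: (col x); case cy: (col y) => //= _.
  exists y, x; split => //; first by rewrite setUC.
  by move=> z; rewrite /sumset /= !inE; rewrite addnC (addnC (_ + 1)) addnA.
exists x, y; split => //.
by move=> z; rewrite /sumset /= !inE addnA.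
Qed.

Lemma g_WIASI : is_k_uniform_WIASI e 2 g.
Proof.
have cardE : forall x y, e x y -> card_n (sumset (g x) (g y)) = 2.
  move=> x y /orient [lo [hi [_ _ _ H]]]; rewrite (card_n_eq H); exact: card2.
split; last exact: cardE.
split.
  split; first by move=> v; rewrite /g; case: (col v).
  split.
    move=> u v; rewrite /g; have := idx_lt u; have := idx_lt v.
    case: (col u); case: (col v) => lv lu H.
    + have : NN * idx u \in [:: NN * idx v; NN * idx v + 1] by rewrite -H mem_head.
      have : NN * idx v \in [:: NN * idx u; NN * idx u + 1] by rewrite H mem_head.
      rewrite !inE => h1 h2; apply: idx_inj; move: h1 h2; nia.
    + have : NN * idx u \in [:: idx v] by rewrite -H mem_head.
      have : NN * idx u + 1 \in [:: idx v] by rewrite -H !inE eqxx orbT.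
      rewrite !inE; lia.
    + have : NN * idx v \in [:: idx u] by rewrite H mem_head.
      have : NN * idx v + 1 \in [:: idx u] by rewrite H !inE eqxx orbT.
      rewrite !inE; lia.
    + have : idx u \in [:: idx v] by rewrite -H mem_head.
      rewrite inE => h; apply: idx_inj; move: h; lia.
  move=> u v u' v' euv euv'.
  have [lo [hi [l1 h1 -> H1]]] := orient euv.
  have [lo' [hi' [l1' h1' -> H1']]] := orient euv'.
  move=> H; have : [:: idx lo + NN * idx hi; idx lo + NN * idx hi + 1] =i
                   [:: idx lo' + NN * idx hi'; idx lo' + NN * idx hi' + 1].
    by move=> z; rewrite -H1 -H1' H.
  move/pair_eq/(decode (idx_lt lo) (idx_lt lo')) => [/idx_inj -> /idx_inj ->] //.
move=> x y exy; rewrite cardE //; have := hcol exy; rewrite /g.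
case: (col x); case: (col y) => //= _; rewrite /card_n /= ?inE;
  (have -> : forall s, (s == s + 1) = false by move=> s; lia); by [].
Qed.

Lemma g_mono : mono_edges_count e g = 0.
Proof.
apply/eqP; rewrite cards_eq0; apply/eqP/setP => S; rewrite in_set0.
apply/negbTE/imsetP => -[p]; rewrite inE => /andP [ep /eqP].
have [_ ->] := g_WIASI; [by [] | exact: ep].
Qed.

Lemma gen_result : admits_UWIASI e /\ sparing_number e 0.
Proof.
split; first by exists 2, g; split => //; exact: g_WIASI.
split => //; exists g; split; [exact: g_WIASI.1 | exact: g_mono].
Qed.
End Gen.

Theorem mainTheorem14 (T1 T2 : finType) (e1 : rel T1) (e2 : rel T2) :
  simple_graph e1 -> simple_graph e2 ->
  admits_UWIASI e1 -> admits_UWIASI e2 ->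
  admits_UWIASI (cart_prod e1 e2) /\ sparing_number (cart_prod e1 e2) 0.
Proof.
move=> _ _ [k1 [f1 [hk1 H1]]] [k2 [f2 [hk2 H2]]].
apply: (@gen_result _ _ (fun p => (card_n (f1 p.1) == 1) (+) (card_n (f2 p.2) == 1))).
move=> [x1 x2] [y1 y2]; rewrite /cart_prod /= => /orP [/andP [/eqP <- E]|/andP [/eqP <- E]].
  have := bip hk2 H2 E.
  by case: (card_n (f1 x1) == 1); case: (card_n (f2 x2) == 1); case: (card_n (f2 y2) == 1).
have := bip hk1 H1 E.
by case: (card_n (f2 x2) == 1); case: (card_n (f1 x1) == 1); case: (card_n (f1 y1) == 1).
Qed.
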